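(* Let $(X,\tau)$ be a fuzzifying topological space such that $\tau_P(A\cap B)\ge\min(\tau_P(A),\tau_P(B))$ for all $A,B\subseteq X$. Then $\max\big(0,T_2^P(X,\tau)+\Gamma_P(X,\tau)-1\big)\le T_4^P(X,\tau)$, i.e. $\vDash T_2^P(X,\tau)\otimes\Gamma_P(X,\tau)\to T_4^P(X,\tau)$.
   Context: A fuzzifying topology on $X$ is $\tau:P(X)\to[0,1]$ with $\tau(X)=1$, $\tau(A\cap B)\ge\min(\tau(A),\tau(B))$, $\tau(\bigcup A_\lambda)\ge\inf\tau(A_\lambda)$. $N_x(A)=\sup_{x\in B\subseteq A}\tau(B)$; $Cl(A)(x)=1-N_x(X\setminus A)$; for $\mu:X\to[0,1]$, $Int(\mu)(x)=\sup_{x\in B}\min(\tau(B),\inf_{y\in B}\mu(y))$; pre-open degrees $\tau_P(A)=\inf_{x\in A}Int(Cl(A))(x)$; $N^P_x(A)=\sup_{x\in B\subseteq A}\tau_P(B)$. $T_2^P(X,\tau)=\inf_{x\ne y}\sup\{\min(N^P_x(U),N^P_y(V)):U\cap V=\emptyset\}$. Pre-normality: $T_4^P(X,\tau)=\inf_{A,B\subseteq X,A\cap B=\emptyset}\min\big(1,1-\min(\tau_P(X\setminus A),\tau_P(X\setminus B))+\sup\{\min(\tau_P(U),\tau_P(V)):U\cap V=\emptyset,A\subseteq U,B\subseteq V\}\big)$. Strong compactness: with $K(\Re,X)=\inf_{x\in X}\sup_{B\ni x}\Re(B)$, $[\Re\subseteq\tau_P]=\inf_B\min(1,1-\Re(B)+\tau_P(B))$,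 $\wp\le\Re$ pointwise, $FF(\wp)=1-\inf\{\delta\in[0,1]:\{B:\wp(B)>\delta\}\text{ finite}\}$, $\Gamma_P(X,\tau)=\inf_{\Re}\min\big(1,1-\max(0,K(\Re,X)+[\Re\subseteq\tau_P]-1)+\sup_{\wp\le\Re}\max(0,K(\wp,X)+FF(\wp)-1)\big)$, inf/sup over fuzzy families $\Re,\wp:P(X)\to[0,1]$. *)

(* Defs.v *)
From HB Require Import structures.
From mathcomp Require Import all_boot all_order all_algebra.
From mathcomp Require Import classical_sets boolp cardinality reals.
Set Implicit Arguments. Unset Strict Implicit. Unset Printing Implicit Defensive.
Import Order.TTheory GRing.Theory Num.Theory.
Local Open Scope classical_set_scope.
Local Open Scope ring_scope.

Section FuzzDefs.
Variables (R : realType) (X : Type).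

(* Supremum of a set of reals in [0,1]; sup of the empty set is 0. *)
Definition Sup01 (S : set R) : R := sup S.
(* Infimum of a set of reals in [0,1]; inf of the empty set is 1. *)
Definition Inf01 (S : set R) : R := 1 - sup [set 1 - s | s in S].

Definition fuzzy_family (F : set X -> R) : Prop := forall B, 0 <= F B <= 1.

Definition fuzzifying_topology (tau : set X -> R) : Prop :=
  [/\ fuzzy_family tau,
      tau setT = 1,
      (forall A B, Num.min (tau A) (tau B) <= tau (A `&` B)) &
      (forall Fam : set (set X),
          Inf01 (tau @` Fam) <= tau (\bigcup_(A in Fam) A))].

Variable tau : set X -> R.

Definition Nbh (x : X) (A : set X) : R :=
  Sup01 [set tau B | B in [set B | B x /\ B `<=` A]].

Definition Cl (A : set X) (x : X) : R := 1 - Nbh x (~` A).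

Definition Int (mu : X -> R) (x : X) : R :=
  Sup01 [set Num.min (tau B) (Inf01 (mu @` B)) | B in [set B : set X | B x]].

Definition tauP (A : set X) : R := Inf01 [set Int (Cl A) x | x in A].

Definition NP (x : X) (A : set X) : R :=
  Sup01 [set tauP B | B in [set B | B x /\ B `<=` A]].

Definition T2P : R :=
  Inf01 [set Sup01 [set Num.min (NP xy.1 UV.1) (NP xy.2 UV.2)
                   | UV in [set UV : set X * set X | UV.1 `&` UV.2 = set0]]
        | xy in [set xy : X * X | xy.1 <> xy.2]].

Definition T4P : R :=
  Inf01 [set Num.min 1
           (1 - Num.min (tauP (~` AB.1)) (tauP (~` AB.2))
            + Sup01 [set Num.min (tauP UV.1) (tauP UV.2)
                    | UV in [set UV : set X * set X |
                             UV.1 `&` UV.2 = set0 /\ AB.1 `<=` UV.1 /\ AB.2 `<=` UV.2]])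
        | AB in [set AB : set X * set X | AB.1 `&` AB.2 = set0]].

Definition Kdeg (F : set X -> R) : R :=
  Inf01 [set Sup01 [set F B | B in [set B : set X | B x]] | x in [set: X]].

Definition subP (F : set X -> R) : R :=
  Inf01 [set Num.min 1 (1 - F B + tauP B) | B in [set: set X]].

Definition FF (F : set X -> R) : R :=
  1 - Inf01 [set d : R | 0 <= d <= 1 /\ finite_set [set B | d < F B]].

Definition GammaP : R :=
  Inf01 [set Num.min 1
           (1 - Num.max 0 (Kdeg Re + subP Re - 1)
            + Sup01 [set Num.max 0 (Kdeg P + FF P - 1)
                    | P in [set P | fuzzy_family P /\ forall B, P B <= Re B]])
        | Re in [set Re | fuzzy_family Re]].

End FuzzDefs.

(* Main.v *)
Require Import Defs.
From mathcomp Require Import all_boot all_order all_algebra.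
From mathcomp Require Import classical_sets boolp cardinality reals.
From mathcomp Require Import lra.
Import Order.TTheory GRing.Theory Num.Theory.
Local Open Scope classical_set_scope.
Local Open Scope ring_scope.

Section RealHelpers.
Variable R : realType.
Implicit Types S : set R.

Lemma empty_or_not S : S = set0 \/ S !=set0.
Proof.
have [S0|S0] := pselect (S !=set0); first by right.
left; apply/seteqP; split=> x Sx //; exfalso; apply: S0; by exists x.
Qed.

Lemma S_ub S s : (forall u, S u -> u <= 1) -> S s -> s <= Sup01 S.
Proof. by move=> h Ss; apply: ub_le_sup => //; exists 1. Qed.

Lemma S_le S b : 0 <= b -> (forall u, S u -> u <= b) -> Sup01 S <= b.
Proof.
move=> b0 h; case: (empty_or_not S) => [->|S0]; first by rewrite /Sup01 sup0.
exact: ge_sup.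
Qed.

Lemma S_ge0 S : (forall u, S u -> 0 <= u <= 1) -> 0 <= Sup01 S.
Proof.
move=> h; case: (empty_or_not S) => [->|[s Ss]]; first by rewrite /Sup01 sup0.
have /andP[h0 _] := h _ Ss; apply: (le_trans h0); by apply: S_ub => // u /h /andP[].
Qed.

Lemma S_01 S : (forall u, S u -> 0 <= u <= 1) -> 0 <= Sup01 S <= 1.
Proof.
move=> h; rewrite S_ge0 //=; by apply: S_le => // u /h /andP[].
Qed.

Lemma S_gt S r : 0 <= r -> r < Sup01 S -> exists2 s, S s & r < s.
Proof.
move=> r0; case: (empty_or_not S) => [->|S0]; first by rewrite /Sup01 sup0 ltNge r0.
exact: sup_gt.
Qed.

Lemma I_le S s : (forall u, S u -> 0 <= u) -> S s -> Inf01 S <= s.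
Proof.
move=> h Ss; rewrite /Inf01 lerBlDr -lerBlDl.
apply: S_ub; last by exists s.
by move=> _ [u Su <-]; rewrite lerBlDr lerDl h.
Qed.

Lemma I_ge S b : b <= 1 -> (forall u, S u -> b <= u) -> b <= Inf01 S.
Proof.
move=> b1 h; rewrite /Inf01 lerBrDr -lerBrDl.
apply: S_le; first by rewrite subr_ge0.
by move=> _ [u Su <-]; rewrite lerD2l lerN2 h.
Qed.

Lemma I_01 S : (forall u, S u -> 0 <= u <= 1) -> 0 <= Inf01 S <= 1.
Proof.
move=> h; rewrite I_ge //=; last by move=> u /h /andP[].
rewrite /Inf01 lerBlDr lerDl; apply: S_ge0 => _ [u /h /andP[u0 u1] <-].
by rewrite subr_ge0 u1 lerBlDr lerDl u0.
Qed.

Lemma I_lt S r : r <= 1 -> Inf01 S < r -> exists2 s, S s & s < r.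
Proof.
move=> r1; rewrite /Inf01 ltrBlDr -ltrBlDl => /S_gt [].
  by rewrite subr_ge0.
by move=> _ [s Ss <-]; rewrite ltrD2l ltrN2 => ?; exists s.
Qed.

Lemma I_gt S r s : (forall u, S u -> 0 <= u) -> r < Inf01 S -> S s -> r < s.
Proof. by move=> h rI Ss; apply: (lt_le_trans rI); apply: I_le. Qed.

Lemma arith1 (t g : R) : t <= 1 -> g <= 1 -> Num.max 0 (t + g - 1) <= 1.
Proof. by move=> t1 g1; rewrite ge_max ler01 /=; lra. Qed.

Lemma arith2 (t g a s : R) : 0 <= t <= 1 -> 0 <= g <= 1 -> 0 <= a <= 1 -> 0 <= s <= 1 ->
  (forall r, 0 <= r <= 1 -> r < t -> 1 - g < r -> 1 - g < a -> s < r -> False) ->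
  Num.max 0 (t + g - 1) <= Num.min 1 (1 - a + s).
Proof.
move=> /andP[t0 t1] /andP[g0 g1] /andP[a0 a1] /andP[s0 s1] h.
rewrite le_min !ge_max ler01 /=.
apply/andP; split; first lra.
apply/andP; split; first lra.
rewrite leNgt; apply/negP => H.
have sm : s <= Num.max s (1 - g) by rewrite le_max lexx.
have gm : 1 - g <= Num.max s (1 - g) by rewrite le_max lexx orbT.
have mt : Num.max s (1 - g) < t by rewrite gt_max; apply/andP; split; lra.
move: sm gm mt; move: (Num.max s (1 - g)) => m sm gm mt.
apply: (h ((t + m) / 2)); try lra.
Qed.

End RealHelpers.

Section Fuzz.
Variables (R : realType) (X : Type) (tau : set X -> R).
Hypothesis Hf : fuzzy_family tau.
Hypothesis HT : tau setT = 1.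

Lemma min01 (a b : R) : 0 <= a <= 1 -> 0 <= b <= 1 -> 0 <= Num.min a b <= 1.
Proof.
move=> /andP[a0 a1] /andP[b0 b1]; rewrite le_min a0 b0 /= ge_min a1 //.
Qed.

Lemma Nbh_01 x A : 0 <= Nbh tau x A <= 1.
Proof. by apply: S_01 => _ [B _ <-]; apply: Hf. Qed.

Lemma Cl_01 A x : 0 <= Cl tau A x <= 1.
Proof.
have /andP[h0 h1] := Nbh_01 x (~` A).
by rewrite /Cl subr_ge0 h1 lerBlDr lerDl h0.
Qed.

Lemma Int_01 mu x : (forall z, 0 <= mu z <= 1) -> 0 <= Int tau mu x <= 1.
Proof.
move=> hmu; apply: S_01 => _ [B _ <-]; apply: min01 => //.
by apply: I_01 => _ [z _ <-].
Qed.

Lemma tauP_01 A : 0 <= tauP tau A <= 1.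
Proof. by apply: I_01 => _ [x _ <-]; apply: Int_01 => z; apply: Cl_01. Qed.

Lemma tauP_ge0 A : 0 <= tauP tau A.
Proof. by have /andP[] := tauP_01 A. Qed.

Lemma tauP_le1 A : tauP tau A <= 1.
Proof. by have /andP[] := tauP_01 A. Qed.

Lemma NP_01 x A : 0 <= NP tau x A <= 1.
Proof. by apply: S_01 => _ [B _ <-]; apply: tauP_01. Qed.

Lemma tauP_set0 : tauP tau set0 = 1.
Proof.
apply/eqP; rewrite eq_le tauP_le1 /=; apply: I_ge => // _ [x []].
Qed.

Lemma tauP_setT : tauP tau setT = 1.
Proof.
apply/eqP; rewrite eq_le tauP_le1 /=; apply: I_ge => // _ [x _ <-].
have ClT z : Cl tau setT z = 1.
  have N0 : Nbh tau z (~` setT) = 0.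
    have /andP[h0 _] := Nbh_01 z (~` setT); apply/eqP; rewrite eq_le h0 andbT.
    by apply: S_le => // _ [B [Bz BS] <-]; exfalso; exact: (BS z Bz).
  by rewrite /Cl N0 subr0.
have h : 1 <= Num.min (tau setT) (Inf01 [set Cl tau setT z | z in setT]).
  rewrite le_min HT lexx /=; apply: I_ge => // _ [z _ <-]; by rewrite ClT.
apply: (le_trans h); apply: S_ub; last by exists setT.
by move=> _ [B _ <-]; have /andP[] := Int_01 (Cl tau B) x (Cl_01 _); rewrite ge_min; have /andP[_ ->] := Hf B.
Qed.

Lemma Cl_mono A A' x : A `<=` A' -> Cl tau A x <= Cl tau A' x.
Proof.
move=> AA'; rewrite /Cl lerD2l lerN2; apply: S_le; first by have /andP[] := Nbh_01 x (~` A).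
move=> _ [B [Bx BA'] <-]; apply: S_ub; first by move=> _ [C _ <-]; have /andP[] := Hf C.
exists B => //; split=> // z /BA' nA' Az; apply: nA'; exact: AA'.
Qed.

Lemma Int_mono (mu mu' : X -> R) x : (forall z, 0 <= mu z <= 1) -> (forall z, 0 <= mu' z <= 1) ->
  (forall z, mu z <= mu' z) -> Int tau mu x <= Int tau mu' x.
Proof.
move=> h h' hle; apply: S_le; first by have /andP[] := Int_01 mu' x h'.
move=> _ [B Bx <-]; apply: (@le_trans _ _ (Num.min (tau B) (Inf01 [set mu' z | z in B]))).
  rewrite le_min ge_min lexx /= ge_min orbC; apply/orP; left; apply: I_ge.
    have : 0 <= Inf01 [set mu z | z in B] <= 1 by apply: I_01 => _ [z _ <-]; apply: h.
    by case/andP.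
  move=> _ [z Bz <-]; apply: le_trans (hle z); apply: I_le; last by exists z.
  by move=> _ [w _ <-]; have /andP[] := h w.
apply: S_ub; last by exists B.
move=> _ [C _ <-]; rewrite ge_min; have /andP[_ ->] := Hf C; done.
Qed.

Lemma tauP_U A B : Num.min (tauP tau A) (tauP tau B) <= tauP tau (A `|` B).
Proof.
apply: I_ge; first by rewrite ge_min; apply/orP; left; exact: tauP_le1.
have key C x : C `<=` A `|` B -> C x -> tauP tau C <= Int tau (Cl tau (A `|` B)) x.
  move=> CAB Cx.
  have h1 : tauP tau C <= Int tau (Cl tau C) x.
    apply: I_le; last by exists x.
    by move=> _ [w _ <-]; have /andP[] := Int_01 _ w (Cl_01 C).
  apply: (le_trans h1); apply: Int_mono => //; [exact: Cl_01|exact: Cl_01|by move=> z; apply: Cl_mono].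
move=> _ [x [Ax|Bx] <-].
  rewrite ge_min; apply/orP; left; apply: key => //; move=> z Az; by left.
rewrite ge_min; apply/orP; right; apply: key => //; move=> z Bz; by right.
Qed.

Local Opaque tauP.

Lemma Kdeg_01 {F : set X -> R} : fuzzy_family F -> 0 <= Kdeg F <= 1.
Proof. by move=> fF; apply: I_01 => _ [z _ <-]; apply: S_01 => _ [B _ <-]; apply: fF. Qed.

Lemma FF_01 (F : set X -> R) : 0 <= FF F <= 1.
Proof.
have /andP[h0 h1] : 0 <= Inf01 [set d : R | 0 <= d <= 1 /\ finite_set [set B | d < F B]] <= 1.
  by apply: I_01 => d [].
by rewrite /FF subr_ge0 h1 lerBlDr lerDl h0.
Qed.

Lemma subP_01 {F : set X -> R} : fuzzy_family F -> 0 <= subP tau F <= 1.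
Proof.
move=> fF; apply: I_01 => _ [B _ <-].
have /andP[f0 f1] := fF B; have := tauP_ge0 B.
rewrite le_min ge_min lexx /= => t0; apply/andP; split => //; lra.
Qed.

Lemma KFF_01 {P : set X -> R} : fuzzy_family P -> 0 <= Num.max 0 (Kdeg P + FF P - 1) <= 1.
Proof.
move=> fP; have /andP[k0 k1] := Kdeg_01 fP; have /andP[f0 f1] := FF_01 P.
rewrite le_max lexx /= ge_max ler01 /=; lra.
Qed.

Lemma term_01 {F : set X -> R} : fuzzy_family F -> 0 <= Num.min 1
           (1 - Num.max 0 (Kdeg F + subP tau F - 1)
            + Sup01 [set Num.max 0 (Kdeg P + FF P - 1)
                    | P in [set P | fuzzy_family P /\ forall B, P B <= F B]]) <= 1.
Proof.
move=> fF; have /andP[k0 k1] := Kdeg_01 fF; have /andP[s0 s1] := subP_01 fF.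
have /andP[S0 S1] : 0 <= Sup01 [set Num.max 0 (Kdeg P + FF P - 1)
                    | P in [set P | fuzzy_family P /\ forall B, P B <= F B]] <= 1.
  by apply: S_01 => _ [P [fP _] <-]; apply: KFF_01.
have hm : Num.max 0 (Kdeg F + subP tau F - 1) <= 1 by rewrite ge_max ler01 /=; lra.
rewrite le_min ler01 /= ge_min lexx /=; lra.
Qed.

Lemma GammaP_01 : 0 <= GammaP tau <= 1.
Proof. by apply: I_01 => _ [F fF <-]; apply: term_01. Qed.

Lemma T2P_01 : 0 <= T2P tau <= 1.
Proof.
apply: I_01 => _ [xy _ <-]; apply: S_01 => _ [UV _ <-]; apply: min01; apply: NP_01.
Qed.

Lemma sep r : 0 <= r -> r < T2P tau -> forall x y, x <> y ->
  exists B C, [/\ B x, C y, B `&` C = set0, r < tauP tau B & r < tauP tau C].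
Proof.
move=> r0 rt x y xy.
have : r < Sup01 [set Num.min (NP tau (x,y).1 UV.1) (NP tau (x,y).2 UV.2)
                   | UV in [set UV : set X * set X | UV.1 `&` UV.2 = set0]].
  move: rt; rewrite /T2P => rt; apply: (@I_gt _ _ r _ _ rt); last by exists (x,y).
  move=> _ [xy' _ <-]; apply: S_ge0 => _ [UV _ <-]; apply: min01; apply: NP_01.
case/S_gt => // _ [[U V] /= UV <-]; rewrite lt_min => /andP[].
case/S_gt => // _ [B [Bx BU] <-] rB.
case/S_gt => // _ [C [Cy CV] <-] rC.
exists B, C; split => //; apply/seteqP; split=> z // [/BU Uz /CV Vz].
by rewrite -UV; split.
Qed.

Lemma cover (Re : set X -> R) : fuzzy_family Re -> (forall B, Re B <= tauP tau B) ->
  1 - GammaP tau < Kdeg Re ->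
  exists s : seq (set X), (forall B, B \in s -> 0 < Re B) /\ (forall z, exists2 B, B \in s & B z).
Proof.
move=> fRe ReP K.
have subP1 : subP tau Re = 1.
  apply/eqP; rewrite eq_le; have /andP[_ ->] := subP_01 fRe; rewrite /=.
  apply: I_ge => // _ [B _ <-]; rewrite le_min lexx /=.
  have := ReP B; lra.
set SS := Sup01 [set Num.max 0 (Kdeg P + FF P - 1)
                    | P in [set P | fuzzy_family P /\ forall B, P B <= Re B]].
have g_le : GammaP tau <= Num.min 1 (1 - Num.max 0 (Kdeg Re + subP tau Re - 1) + SS).
  rewrite /GammaP; apply: I_le; last by exists Re.
  by move=> _ [F fF <-]; have /andP[] := term_01 fF.
have /andP[k0 k1] := Kdeg_01 fRe.
move: g_le; rewrite subP1 addrK (max_r k0) le_min => /andP[_ gle].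
have : 0 < SS by lra.
case/S_gt => // _ [P [fP Ple] <-]; rewrite lt_max ltxx /= /FF => hP.
have /andP[kp0 kp1] := Kdeg_01 fP.
have [d [/andP[d0 d1] fin] dK] : exists2 d, (0 <= d <= 1 /\ finite_set [set B | d < P B]) & d < Kdeg P.
  by apply: I_lt => //; lra.
move: fin => /finite_seqP [s sE].
exists s; split.
  move=> B Bs; have : [set` s] B by [].
  rewrite -sE /= => dB; apply: (le_lt_trans d0); apply: (lt_le_trans dB); exact: Ple.
move=> z.
have : Kdeg P <= Sup01 [set P B | B in [set B | B z]].
  apply: I_le; last by exists z.
  by move=> _ [w _ <-]; apply: S_ge0 => _ [B _ <-]; apply: fP.
move=> /(lt_le_trans dK) /S_gt [] // _ [B Bz <-] dB.
exists B => //; have : [set B | d < P B] B by [].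
by rewrite sE.
Qed.

Hypothesis Hint : forall A B : set X,
      Num.min (tauP tau A) (tauP tau B) <= tauP tau (A `&` B).

Lemma gen (A W : set X) (r : R) : 0 <= r <= 1 -> 1 - GammaP tau < r ->
  1 - GammaP tau < tauP tau (~` A) ->
  (forall x, A x -> exists UV : set X * set X,
     [/\ UV.1 x, W `<=` UV.2, UV.1 `&` UV.2 = set0, r <= tauP tau UV.1 & r <= tauP tau UV.2]) ->
  exists U V, [/\ A `<=` U, W `<=` V, U `&` V = set0, r <= tauP tau U & r <= tauP tau V].
Proof.
move=> /andP[r0 r1] rg Ag hx.
have [f hf] : exists f : X -> set X * set X, forall x, A x ->
   [/\ (f x).1 x, W `<=` (f x).2, (f x).1 `&` (f x).2 = set0,
       r <= tauP tau (f x).1 & r <= tauP tau (f x).2].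
  have h : forall x, exists UV : set X * set X, A x -> [/\ UV.1 x, W `<=` UV.2, UV.1 `&` UV.2 = set0,
       r <= tauP tau UV.1 & r <= tauP tau UV.2].
    move=> x; case: (pselect (A x)) => [Ax|nAx].
      by have [UV h] := hx x Ax; exists UV.
    by exists (set0, set0).
  by have [f hf] := choice h; exists f.
pose Q C := C = ~` A \/ exists2 x, A x & C = (f x).1.
pose Re C := if `[< Q C >] then tauP tau C else 0.
have fRe : fuzzy_family Re.
  move=> C; rewrite /Re; case: ifP => _; [apply: tauP_01 | apply/andP; split; [exact: lexx | exact: ler01]].
have ReP : forall C, Re C <= tauP tau C.
  move=> C; rewrite /Re; case: ifP => _; [exact: lexx | apply: tauP_ge0].
have Sub C z : C z -> Re C <= Sup01 [set Re B | B in [set B | B z]].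
  move=> Cz; apply: S_ub; last by exists C.
  by move=> _ [B _ <-]; have /andP[] := fRe B.
have K : 1 - GammaP tau < Kdeg Re.
  have : Num.min (tauP tau (~` A)) r <= Kdeg Re.
    apply: I_ge; first by rewrite ge_min r1 orbT.
    move=> _ [z _ <-]; case: (pselect (A z)) => [Az|nAz].
      have [f1z _ _ rU _] := hf z Az.
      apply: (le_trans _ (Sub _ _ f1z)).
      rewrite /Re asboolT; first by rewrite ge_min rU orbT.
      by right; exists z.
    apply: (le_trans _ (Sub (~` A) _ nAz)).
    rewrite /Re asboolT; first by rewrite ge_min lexx.
    by left.
  by apply: lt_le_trans; rewrite lt_min rg Ag.
have [s [spos scov]] := cover _ fRe ReP K.
have main : forall l : seq (set X), (forall C, C \in l -> 0 < Re C) ->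
  exists U V, [/\ (forall z, A z -> (exists2 C, C \in l & C z) -> U z), W `<=` V,
        U `&` V = set0, r <= tauP tau U & r <= tauP tau V].
  elim => [_|C l IH hl].
    exists set0, setT; split.
    - by move=> z _ [C]; rewrite in_nil.
    - by [].
    - by rewrite set0I.
    - by rewrite tauP_set0.
    - by rewrite tauP_setT.
  have [U [V [hU hW hUV rU rV]]] : exists U V, [/\ (forall z, A z -> (exists2 C, C \in l & C z) -> U z), W `<=` V,
        U `&` V = set0, r <= tauP tau U & r <= tauP tau V].
    by apply: IH => C' hC'; apply: hl; rewrite in_cons hC' orbT.
  have : 0 < Re C by apply: hl; rewrite in_cons eqxx.
  rewrite /Re; case: ifP => [/asboolP [->|[x Ax ->]] _|]; last by rewrite ltxx.
    exists U, V; split => // z Az [C']; rewrite in_cons => /orP[/eqP -> | C'l] C'z.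
      by exfalso.
    by apply: hU => //; exists C'.
  have [fx1 fx2 fx3 fx4 fx5] := hf x Ax.
  exists (U `|` (f x).1), (V `&` (f x).2); split.
  - move=> z Az [C']; rewrite in_cons => /orP[/eqP -> | C'l] C'z; first by right.
    by left; apply: hU => //; exists C'.
  - by move=> z Wz; split; [exact: hW | exact: fx2].
  - apply/seteqP; split=> z // [[Uz|fz] [Vz f2z]].
      by rewrite -hUV; split.
    by rewrite -fx3; split.
  - apply: le_trans (tauP_U _ _); rewrite le_min; apply/andP; split; [exact: rU | exact: fx4].
  - apply: le_trans (Hint _ _); rewrite le_min; apply/andP; split; [exact: rV | exact: fx5].
have [U [V [hU hW hUV rU rV]]] := main s spos.
by exists U, V; split => // z Az; apply: hU => //; apply: scov.
Qed.

Local Opaque T2P GammaP.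

Lemma main_thm : Num.max 0 (T2P tau + GammaP tau - 1) <= T4P tau.
Proof.
have t01 := T2P_01; have g01 := GammaP_01.
have /andP[_ t1] := t01; have /andP[_ g1] := g01.
have sep' := @sep; have gen' := @gen.
rewrite /T4P; apply: I_ge; first exact: arith1.
move=> _ [[A B] /= AB <-].
have aA : Num.min (tauP tau (~` A)) (tauP tau (~` B)) <= tauP tau (~` A).
  by rewrite ge_min; apply/orP; left; exact: lexx.
have aB : Num.min (tauP tau (~` A)) (tauP tau (~` B)) <= tauP tau (~` B).
  by rewrite ge_min; apply/orP; right; exact: lexx.
have Sfact : forall U V, U `&` V = set0 -> A `<=` U -> B `<=` V ->
    Num.min (tauP tau U) (tauP tau V) <= Sup01 [set Num.min (tauP tau UV.1) (tauP tau UV.2)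
                    | UV in [set UV : set X * set X |
                             UV.1 `&` UV.2 = set0 /\ A `<=` UV.1 /\ B `<=` UV.2]].
  move=> U V UV AU BV; apply: S_ub.
    by move=> _ [UV' _ <-]; rewrite ge_min; apply/orP; left; exact: tauP_le1.
  by exists (U, V).
apply: arith2.
- exact: t01.
- exact: g01.
- by apply: min01; apply: tauP_01.
- by apply: S_01 => _ [UV _ <-]; apply: min01; apply: tauP_01.
move=> r r01 rt rg ag sr.
have /andP[r0 _] := r01.
have Ag : 1 - GammaP tau < tauP tau (~` A) by apply: (lt_le_trans ag aA).
have Bg : 1 - GammaP tau < tauP tau (~` B) by apply: (lt_le_trans ag aB).
have step1 : forall y, B y -> exists U V, [/\ A `<=` U, [set y] `<=` V, U `&` V = set0,
     r <= tauP tau U & r <= tauP tau V].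
  move=> y By; apply: (gen' A [set y] r r01 rg Ag) => x Ax.
  have xy : x <> y.
    move=> exy; subst x; have : (A `&` B) y by split.
    by rewrite AB.
  have [C [D [Cx Dy CD rC rD]]] := sep' r r0 rt x y xy.
  exists (C, D); split.
  - exact: Cx.
  - by move=> z /= ->.
  - exact: CD.
  - exact: (ltW rC).
  - exact: (ltW rD).
have [U2 [V2 [BU AV UV rU rV]]] : exists U V, [/\ B `<=` U, A `<=` V, U `&` V = set0,
     r <= tauP tau U & r <= tauP tau V].
  apply: (gen' B A r r01 rg Bg) => y By.
  have [U [V [AU yV UV rU rV]]] := step1 y By.
  exists (V, U); split.
  - by apply: yV.
  - exact: AU.
  - by rewrite /= setIC.
  - exact: rV.
  - exact: rU.
have h1 : r <= Num.min (tauP tau V2) (tauP tau U2).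
  by rewrite le_min; apply/andP; split; [exact: rV | exact: rU].
have UV' : V2 `&` U2 = set0 by rewrite setIC.
have := lt_le_trans sr (le_trans h1 (Sfact V2 U2 UV' AV BU)).
by rewrite ltxx.
Qed.

End Fuzz.

Theorem lemma3p4 (R : realType) (X : Type) (tau : set X -> R) :
  fuzzifying_topology tau ->
  (forall A B : set X,
      Num.min (tauP tau A) (tauP tau B) <= tauP tau (A `&` B)) ->
  Num.max 0 (T2P tau + GammaP tau - 1) <= T4P tau.
Proof.
move=> [Hf HT _ _] Hint.
exact: (@main_thm R X tau Hf HT Hint).
Qed.
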